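(* Let $(G_n)_{n\in\mathbb N}$ be a sequence of groups. If $g\in\circledast_nG_n$ has finite order, then $g$ is conjugate in $\circledast_nG_n$ to an element of some factor $G_i$.
   Context: For a sequence of groups $(G_n)_{n\in\mathbb N}$, an infinite word is a map $w:L\to\bigsqcup_n (G_n\setminus\{1\})$ from a countable linearly ordered set $L$ such that $w^{-1}(G_n)$ is finite for every $n$. Two infinite words are equivalent if for every $m$ their restrictions to the letters from $G_1,\dots,G_m$ represent the same element of $G_1*\cdots*G_m$. The topologist's product $\circledast_n G_n$ is the group of equivalence classes, with multiplication induced by concatenation and inversion by reversing the order and inverting each letter; each $G_i$ is a subgroup (one-letter words). *)

(* Defs.v *)
(* Topologist's product of a sequence of (possibly infinite) groups. *)
From Stdlib Require Import List Relations Sorting.Sorted Arith.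
Import ListNotations.

Record Grp := {
  gcar :> Type;
  gmul : gcar -> gcar -> gcar;
  ginv : gcar -> gcar;
  gone : gcar;
  gmulA : forall x y z, gmul x (gmul y z) = gmul (gmul x y) z;
  gmul1 : forall x, gmul gone x = x;
  gmulV : forall x, gmul (ginv x) x = gone
}.
Arguments gmul {g} _ _.
Arguments ginv {g} _.
Arguments gone {g}.

Definition letter (G : nat -> Grp) := {n : nat & gcar (G n)}.

(* Free product G_0 * ... * G_m, presented as finite letter sequences (indices <= m)
   modulo the equivalence generated by merging adjacent letters of the same factor
   and deleting identity letters. *)
Inductive fp_step (G : nat -> Grp) (m : nat) : list (letter G) -> list (letter G) -> Prop :=
| fp_merge (s t : list (letter G)) (n : nat) (g h : G n) :
    n <= m ->
    fp_step G m (s ++ existT _ n g :: existT _ n h :: t) (s ++ existT _ n (gmul g h) :: t)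
| fp_drop (s t : list (letter G)) (n : nat) :
    n <= m ->
    fp_step G m (s ++ existT _ n (@gone (G n)) :: t) (s ++ t).

Definition fp_equiv (G : nat -> Grp) (m : nat) : relation (list (letter G)) :=
  clos_refl_sym_trans _ (fp_step G m).

Record raw_word (G : nat -> Grp) := RW {
  pos : Type;
  plt : pos -> pos -> Prop;
  plet : pos -> letter G
}.
Arguments RW {G} _ _ _.
Arguments pos {G} _.
Arguments plt {G} _ _ _.
Arguments plet {G} _ _.

Definition is_word {G : nat -> Grp} (w : raw_word G) : Prop :=
  (forall x, ~ plt w x x) /\
  (forall x y z, plt w x y -> plt w y z -> plt w x z) /\
  (forall x y, x = y \/ plt w x y \/ plt w y x) /\
  (exists f : pos w -> nat, forall x y, f x = f y -> x = y) /\
  (forall x, projT2 (plet w x) <> gone) /\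
  (forall n, exists s : list (pos w), forall x, projT1 (plet w x) = n -> In x s).

Definition restr {G : nat -> Grp} (w : raw_word G) (m : nat) (s : list (pos w)) : Prop :=
  StronglySorted (plt w) s /\ (forall x, In x s <-> projT1 (plet w x) <= m).

Definition word_equiv {G : nat -> Grp} (w1 w2 : raw_word G) : Prop :=
  forall m s1 s2, restr w1 m s1 -> restr w2 m s2 ->
    fp_equiv G m (map (plet w1) s1) (map (plet w2) s2).

Definition wconcat {G : nat -> Grp} (w1 w2 : raw_word G) : raw_word G :=
  RW (pos w1 + pos w2)%type
     (fun a b => match a, b with
                 | inl x, inl y => plt w1 x y
                 | inr x, inr y => plt w2 x y
                 | inl _, inr _ => True
                 | inr _, inl _ => False
                 end)
     (fun a => match a with inl x => plet w1 x | inr y => plet w2 y end).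

Definition winv {G : nat -> Grp} (w : raw_word G) : raw_word G :=
  RW (pos w) (fun a b => plt w b a)
     (fun a => existT _ (projT1 (plet w a)) (ginv (projT2 (plet w a)))).

Definition wempty {G : nat -> Grp} : raw_word G :=
  RW Empty_set (fun _ _ => False) (fun e => match e with end).

Definition wsingle {G : nat -> Grp} (i : nat) (a : G i) : raw_word G :=
  RW unit (fun _ _ => False) (fun _ => existT _ i a).

Fixpoint wpow {G : nat -> Grp} (w : raw_word G) (k : nat) : raw_word G :=
  match k with
  | 0 => wempty
  | S k' => wconcat (wpow w k') w
  end.

(* Main.v *)
Require Import Defs.
From Stdlib Require Import List Relations Sorting.Sorted Arith Lia Classical ClassicalEpsilon ProofIrrelevance Eqdep_dec Bool.
Import ListNotations.

Lemma g_mulV {H : Grp} (x : H) : gmul x (ginv x) = gone.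
Proof.
  rewrite <- (gmul1 H (gmul x (ginv x))).
  rewrite <- (gmulV H (ginv x)) at 1.
  rewrite <- gmulA. rewrite (gmulA H (ginv x) x (ginv x)). rewrite gmulV, gmul1.
  apply gmulV.
Qed.

Lemma g_mul1r {H : Grp} (x : H) : gmul x gone = x.
Proof. rewrite <- (gmulV H x), gmulA, g_mulV, gmul1. reflexivity. Qed.

Lemma g_cancel {H : Grp} (g a b : H) : gmul g a = gmul g b -> a = b.
Proof.
  intro E. rewrite <- (gmul1 H a), <- (gmul1 H b), <- (gmulV H g), <- !gmulA, E. reflexivity.
Qed.

Lemma g_invinv {H : Grp} (x : H) : ginv (ginv x) = x.
Proof. apply (g_cancel (ginv x)). rewrite g_mulV, gmulV. reflexivity. Qed.

Lemma g_inv_eq {H : Grp} (g h : H) : gmul g h = gone -> g = ginv h.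
Proof.
  intro E. rewrite <- (g_mul1r g), <- (g_mulV h), gmulA, E, gmul1. reflexivity.
Qed.

Lemma g_inv1 {H : Grp} (x : H) : ginv x = gone -> x = gone.
Proof. intro E. rewrite <- (g_invinv x), E. rewrite <- (gmulV H gone) at 2. rewrite g_mul1r. reflexivity. Qed.

Notation LT G n g := (@existT nat (fun j => gcar (G j)) n g).

Definition dec (P : Prop) : {P} + {~P} := excluded_middle_informative P.

Section FP.
End FP.

Definition act {G : nat -> Grp} (e : letter G) (r : list (letter G)) : list (letter G) :=
  match e with existT _ n g =>
  if dec (g = gone) then r else
  match r with
  | existT _ n' h :: r' =>
      match Nat.eq_dec n' n with
      | left E => let k := gmul g (eq_rect n' (fun j => gcar (G j)) h n E) in
                  if dec (k = gone) then r' else LT G n k :: r'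
      | right _ => LT G n g :: r
      end
  | [] => [LT G n g]
  end end.

Fixpoint red {G : nat -> Grp} (r : list (letter G)) : Prop :=
  match r with
  | [] => True
  | e :: r' => projT2 e <> gone /\ red r' /\
      match r' with [] => True | e' :: _ => projT1 e' <> projT1 e end
  end.

Definition hdn {G : nat -> Grp} (n : nat) (r : list (letter G)) : Prop :=
  match r with [] => True | e :: _ => projT1 e <> n end.

Lemma act_one {G : nat -> Grp} (n : nat) (r : list (letter G)) : act (LT G n gone) r = r.
Proof. simpl. destruct (dec _); [reflexivity|congruence]. Qed.

Lemma act_diff {G : nat -> Grp} (n : nat) (g : G n) r : g <> gone -> hdn n r -> act (LT G n g) r = LT G n g :: r.
Proof.
  intros Hg Hh. simpl. destruct (dec _); [congruence|].
  destruct r as [|[n' h] r']; [reflexivity|]. simpl in Hh.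
  destruct (Nat.eq_dec n' n); [congruence|reflexivity].
Qed.

Lemma act_same {G : nat -> Grp} (n : nat) (g h : G n) r : g <> gone ->
  act (LT G n g) (LT G n h :: r) =
  if dec (gmul g h = gone) then r else LT G n (gmul g h) :: r.
Proof.
  intros Hg. simpl. destruct (dec (g = gone)); [congruence|].
  destruct (Nat.eq_dec n n) as [E|E]; [|congruence].
  rewrite (UIP_refl_nat n E). reflexivity.
Qed.

Lemma act_red {G : nat -> Grp} (e : letter G) r : red r -> red (act e r).
Proof.
  destruct e as [n g]. intros Hr. destruct (dec (g = gone)) as [E|E].
  { subst. rewrite (@act_one G). exact Hr. }
  destruct r as [|[n' h] r'].
  { rewrite (@act_diff G); simpl; auto. }
  destruct (Nat.eq_dec n' n) as [->|ne].
  - rewrite (@act_same G) by exact E. simpl in Hr. destruct Hr as (H1 & H2 & H3).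
    destruct (dec _); simpl; auto.
  - rewrite (@act_diff G) by (simpl; auto). simpl. simpl in Hr. tauto.
Qed.

Ltac dd P := let H := fresh "D" in destruct (dec P) as [H|H].

Lemma act_merge {G : nat -> Grp} (n : nat) (g h : G n) r : red r ->
  act (LT G n g) (act (LT G n h) r) = act (LT G n (gmul g h)) r.
Proof.
  intros Hr.
  destruct (dec (h = gone)) as [Eh|Eh].
  { subst. rewrite (@act_one G), g_mul1r. reflexivity. }
  destruct (dec (g = gone)) as [Eg|Eg].
  { subst. rewrite (@act_one G), gmul1. reflexivity. }
  assert (Hcase : hdn n r \/ exists h0 r', r = LT G n h0 :: r' /\ h0 <> gone /\ hdn n r' /\ red r').
  { destruct r as [|[n' h0] r']; [left; exact I|].
    destruct (Nat.eq_dec n' n) as [->|ne]; [right|left; exact ne].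
    simpl in Hr. destruct Hr as (H1&H2&H3). exists h0, r'. repeat split; auto.
    }
  destruct Hcase as [Hd | (h0 & r' & -> & Hh0 & Hd & Hr')].
  - rewrite (@act_diff G n h) by auto. rewrite (@act_same G) by auto.
    destruct (dec (gmul g h = gone)) as [E|E].
    + rewrite E, act_one. reflexivity.
    + rewrite (@act_diff G); auto.
  - rewrite (@act_same G n h) by auto.
    destruct (dec (gmul h h0 = gone)) as [E1|E1].
    + rewrite (@act_diff G) by auto.
      destruct (dec (gmul g h = gone)) as [E2|E2].
      * rewrite E2, act_one. f_equal. f_equal.
        apply g_inv_eq in E1. apply g_inv_eq in E2. subst.
        rewrite g_invinv. reflexivity.
      * rewrite (@act_same G) by auto. rewrite <- gmulA, E1, g_mul1r.
        destruct (dec (g = gone)); [congruence|reflexivity].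
    + rewrite (@act_same G) by auto.
      destruct (dec (gmul g h = gone)) as [E2|E2].
      * rewrite E2, act_one. rewrite gmulA, E2, gmul1.
        destruct (dec (h0 = gone)); [congruence|reflexivity].
      * rewrite (@act_same G) by auto. rewrite gmulA. reflexivity.
Qed.

Lemma act_cons_red {G : nat -> Grp} (e : letter G) r : red (e :: r) -> act e r = e :: r.
Proof.
  destruct e as [n g]. simpl. intros (H1 & H2 & H3).
  apply act_diff; auto.
Qed.

Definition A {G : nat -> Grp} (x r : list (letter G)) := fold_right act r x.
Definition nf {G : nat -> Grp} (x : list (letter G)) := A x [].

Lemma A_app {G : nat -> Grp} (x y r : list (letter G)) : A (x ++ y) r = A x (A y r).
Proof. unfold A. apply fold_right_app. Qed.

Lemma A_cons {G : nat -> Grp} (e : letter G) x r : A (e :: x) r = act e (A x r).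
Proof. reflexivity. Qed.

Lemma A_red {G : nat -> Grp} (x r : list (letter G)) : red r -> red (A x r).
Proof. induction x; simpl; auto. intros. apply act_red; auto. Qed.

Lemma nf_red {G : nat -> Grp} (x : list (letter G)) : red (nf x).
Proof. apply A_red. exact I. Qed.

Lemma fp_step_A {G : nat -> Grp} m x y : fp_step G m x y -> forall r, red r -> A x r = A y r.
Proof.
  intros H r Hr. destruct H.
  - rewrite !A_app, !(@A_cons G). rewrite (@act_merge G); auto. apply A_red; auto.
  - rewrite !A_app, !(@A_cons G). rewrite (@act_one G). reflexivity.
Qed.

Lemma fp_equiv_A {G : nat -> Grp} m x y : fp_equiv G m x y -> forall r, red r -> A x r = A y r.
Proof.
  induction 1; intros; auto.
  - eapply fp_step_A; eauto.
  - symmetry; auto.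
  - rewrite IHclos_refl_sym_trans1, IHclos_refl_sym_trans2; auto.
Qed.

Lemma A_act {G : nat -> Grp} (e : letter G) s r : red s -> red r -> A (act e s) r = act e (A s r).
Proof.
  destruct e as [n g]. intros Hs Hr.
  destruct (dec (g = gone)) as [Eg|Eg].
  { subst. rewrite !(@act_one G). reflexivity. }
  destruct s as [|[n' h] s'].
  { rewrite (@act_diff G) by (simpl; auto). reflexivity. }
  destruct (Nat.eq_dec n' n) as [->|ne].
  - rewrite (@act_same G) by auto. simpl in Hs. destruct Hs as (H1 & H2 & H3).
    rewrite (@A_cons G). rewrite (@act_merge G) by (apply A_red; auto).
    destruct (dec _) as [E|E].
    + rewrite E, act_one. reflexivity.
    + reflexivity.
  - rewrite (@act_diff G) by (simpl; auto). reflexivity.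
Qed.

Lemma A_nf {G : nat -> Grp} (x r : list (letter G)) : red r -> A x r = A (nf x) r.
Proof.
  intros Hr. induction x as [|e x IH]; [reflexivity|].
  simpl. rewrite IH. unfold nf. simpl. rewrite A_act; auto. apply nf_red.
Qed.

Lemma nf_of_red {G : nat -> Grp} (x : list (letter G)) : red x -> nf x = x.
Proof.
  induction x as [|e x IH]; [reflexivity|].
  intros Hx. unfold nf; simpl. fold (nf x). rewrite IH.
  - apply act_cons_red; auto.
  - destruct Hx as (_ & H & _); auto.
Qed.

Definition linv1 {G : nat -> Grp} (l : letter G) : letter G :=
  existT _ (projT1 l) (ginv (projT2 l)).
Definition linv {G : nat -> Grp} (x : list (letter G)) := rev (map linv1 x).

Lemma linv1K {G : nat -> Grp} (l : letter G) : linv1 (linv1 l) = l.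
Proof. destruct l as [n g]. unfold linv1; simpl. rewrite g_invinv. reflexivity. Qed.

Lemma linvK {G : nat -> Grp} (x : list (letter G)) : linv (linv x) = x.
Proof.
  unfold linv. rewrite map_rev, rev_involutive, map_map.
  rewrite (map_ext _ (fun l => l)) by apply linv1K. apply map_id.
Qed.

Lemma act_inv {G : nat -> Grp} (e : letter G) r : red r -> act (linv1 e) (act e r) = r.
Proof.
  destruct e as [n g]. intros Hr. unfold linv1; simpl projT1; simpl projT2.
  rewrite (@act_merge G) by auto. rewrite gmulV, act_one. reflexivity.
Qed.

Lemma A_linv {G : nat -> Grp} (x r : list (letter G)) : red r -> A (linv x) (A x r) = r.
Proof.
  revert r. induction x as [|e x IH]; intros r Hr; [reflexivity|].
  unfold linv. simpl map. simpl rev. rewrite A_app, (@A_cons G). unfold A at 2. simpl fold_right.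
  fold (A x r). rewrite act_inv by (apply A_red; auto).
  apply IH; auto.
Qed.

Lemma A_linv' {G : nat -> Grp} (x r : list (letter G)) : red r -> A x (A (linv x) r) = r.
Proof. intros. rewrite <- (linvK x) at 1. apply A_linv; auto. Qed.

Lemma act_len {G : nat -> Grp} (e : letter G) r : length (act e r) <= S (length r).
Proof.
  destruct e as [n g]. simpl. destruct (dec _); [lia|].
  destruct r as [|[n' h] r']; simpl; [lia|].
  destruct (Nat.eq_dec n' n); [destruct (dec _); simpl; lia|simpl; lia].
Qed.

Lemma A_len {G : nat -> Grp} (x r : list (letter G)) : length (A x r) <= length x + length r.
Proof. induction x; simpl; [lia|]. pose proof (act_len a (A x r)). lia. Qed.

Definition ok {G : nat -> Grp} m (x : list (letter G)) := Forall (fun l : letter G => projT1 l <= m) x.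

Lemma fpe_prefix {G : nat -> Grp} m (a y z : list (letter G)) :
  fp_equiv G m y z -> fp_equiv G m (a ++ y) (a ++ z).
Proof.
  induction 1.
  - apply rst_step. destruct H; rewrite !app_assoc; constructor; auto.
  - apply rst_refl.
  - apply rst_sym; auto.
  - eapply rst_trans; eauto.
Qed.

Lemma act_ok {G : nat -> Grp} m (e : letter G) r : ok m (e :: r) -> ok m (act e r).
Proof.
  destruct e as [n g]. intros Hok. inversion Hok as [|? ? Hn Hr]; subst. simpl in Hn.
  destruct (dec (g = gone)) as [E|E].
  { subst. rewrite (@act_one G). auto. }
  destruct r as [|[n' h] r'].
  { rewrite (@act_diff G) by (simpl; auto). auto. }
  destruct (Nat.eq_dec n' n) as [->|ne].
  - rewrite (@act_same G) by auto. inversion Hr; subst.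
    destruct (dec _); auto. constructor; auto.
  - rewrite (@act_diff G) by (simpl; auto). auto.
Qed.

Lemma act_fpe {G : nat -> Grp} m (e : letter G) r : ok m (e :: r) -> fp_equiv G m (e :: r) (act e r).
Proof.
  destruct e as [n g]. intros Hok. inversion Hok as [|? ? Hn Hr]; subst. simpl in Hn.
  destruct (dec (g = gone)) as [E|E].
  { subst. rewrite (@act_one G). apply rst_step. apply (fp_drop G m [] r n Hn). }
  destruct r as [|[n' h] r'].
  { rewrite (@act_diff G) by (simpl; auto). apply rst_refl. }
  destruct (Nat.eq_dec n' n) as [->|ne].
  - rewrite (@act_same G) by auto.
    assert (S1 : fp_equiv G m (LT G n g :: LT G n h :: r') (LT G n (gmul g h) :: r')).
    { apply rst_step. apply (fp_merge G m [] r' n g h Hn). }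
    destruct (dec _) as [E2|E2]; auto.
    eapply rst_trans; [exact S1|]. rewrite E2. apply rst_step. apply (fp_drop G m [] r' n Hn).
  - rewrite (@act_diff G) by (simpl; auto). apply rst_refl.
Qed.

Lemma A_ok {G : nat -> Grp} m (x r : list (letter G)) : ok m x -> ok m r -> ok m (A x r).
Proof.
  induction x as [|e x IH]; intros Hx Hr; [exact Hr|]. inversion Hx; subst.
  rewrite (@A_cons G). apply act_ok. constructor; auto. apply IH; auto.
Qed.

Lemma nf_ok {G : nat -> Grp} m (x : list (letter G)) : ok m x -> ok m (nf x).
Proof. intros. apply A_ok; auto. constructor. Qed.

Lemma nf_fpe {G : nat -> Grp} m (x : list (letter G)) : ok m x -> fp_equiv G m x (nf x).
Proof.
  induction x as [|e x IH]; intros Hx. { apply rst_refl. }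
  inversion Hx; subst. unfold nf. rewrite (@A_cons G). fold (nf x).
  eapply rst_trans. { apply (fpe_prefix m [e]). apply IH; auto. }
  apply act_fpe. constructor; auto. apply nf_ok; auto.
Qed.

Lemma fpe_of_nf {G : nat -> Grp} m (x y : list (letter G)) : ok m x -> ok m y -> nf x = nf y -> fp_equiv G m x y.
Proof.
  intros Hx Hy E. eapply rst_trans. apply nf_fpe; auto. rewrite E. apply rst_sym, nf_fpe; auto.
Qed.

Lemma nf_of_fpe {G : nat -> Grp} m (x y : list (letter G)) : fp_equiv G m x y -> nf x = nf y.
Proof. intros H. apply (fp_equiv_A m x y H). exact I. Qed.

Fixpoint lpow {G : nat -> Grp} (x : list (letter G)) k :=
  match k with 0 => [] | S k => lpow x k ++ x end.

Lemma A_lpow_nf {G : nat -> Grp} (x : list (letter G)) k r : red r -> A (lpow x k) r = A (lpow (nf x) k) r.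
Proof.
  revert r; induction k; intros r Hr; simpl; [reflexivity|].
  rewrite !A_app, (A_nf x r) by auto. apply IHk. apply A_red; auto.
Qed.

Lemma red_app {G : nat -> Grp} (a b : list (letter G)) : red a -> red b ->
  (forall d, a <> [] -> b <> [] -> projT1 (last a d) <> projT1 (hd d b)) -> red (a ++ b).
Proof.
  induction a as [|e a IH]; intros Ha Hb Hbd; simpl; auto.
  simpl in Ha. destruct Ha as (H1 & H2 & H3). split; [auto|split].
  - apply IH; auto. intros d Hne Hbne. specialize (Hbd d ltac:(discriminate) Hbne).
    destruct a; [congruence|]. exact Hbd.
  - destruct a as [|e' a'].
    + destruct b as [|e'' b]; auto. specialize (Hbd e ltac:(discriminate) ltac:(discriminate)).
      simpl in Hbd |- *. auto.
    + simpl. exact H3.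
Qed.

Lemma lpow_len {G : nat -> Grp} (x : list (letter G)) k : length (lpow x k) = k * length x.
Proof. induction k; simpl; auto. rewrite length_app, IHk. lia. Qed.

Lemma red_lpow {G : nat -> Grp} (r : list (letter G)) k : red r -> r <> [] ->
  (forall d, projT1 (last r d) <> projT1 (hd d r)) -> red (lpow r k).
Proof.
  intros Hr Hne Hc. induction k; simpl; [exact I|].
  apply red_app; auto. intros d H1 H2.
  destruct k; [simpl in H1; congruence|]. simpl.
  destruct (exists_last Hne) as (r0 & a & ->).
  rewrite app_assoc, last_last. specialize (Hc d). rewrite last_last in Hc. exact Hc.
Qed.

Lemma act_shape {G : nat -> Grp} (e : letter G) r :
  act e r = r \/ (exists a, r = a :: act e r) \/ (exists a b r', r = a :: r' /\ act e r = b :: r') \/ act e r = e :: r.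
Proof.
  destruct e as [n g]. destruct (dec (g = gone)) as [E|E].
  { subst. left. apply (@act_one G). }
  destruct r as [|[n' h] r'].
  { right; right; right. rewrite (@act_diff G) by (simpl; auto). reflexivity. }
  destruct (Nat.eq_dec n' n) as [->|ne].
  - rewrite (@act_same G) by auto. destruct (dec _).
    + right; left. eauto.
    + right; right; left. eauto.
  - right; right; right. rewrite (@act_diff G) by (simpl; auto). reflexivity.
Qed.

Lemma suffix_split {G : nat -> Grp} (x : list (letter G)) : forall z T, nf x = z ++ T ->
  exists p q, x = p ++ q /\ nf q = T.
Proof.
  induction x as [|e x IH]; intros z T E.
  { exists [], []. split; auto. simpl. destruct z; [exact E|discriminate]. }
  destruct (classic (nf (e :: x) = T)) as [E2|E2].
  { exists [], (e :: x). auto. }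
  destruct z as [|z0 z1]; [exfalso; apply E2; exact E|].
  assert (exists z', nf x = z' ++ T) as [z' Ez'].
  { unfold nf in E. rewrite (@A_cons G) in E. fold (nf x) in E.
    destruct (act_shape e (nf x)) as [H|[[a H]|[(a & b & r' & H1 & H2)|H]]].
    - rewrite H in E. eauto.
    - exists (a :: z0 :: z1). rewrite H, E. reflexivity.
    - rewrite H2 in E. inversion E; subst. exists (a :: z1). rewrite H1. reflexivity.
    - rewrite H in E. inversion E. eauto. }
  destruct (IH _ _ Ez') as (p & q & -> & Hq). exists (e :: p), q. auto.
Qed.

Lemma rot_pow {G : nat -> Grp} (p q : list (letter G)) k : lpow (q ++ p) k ++ q = q ++ lpow (p ++ q) k.
Proof.
  induction k; simpl. { rewrite app_nil_r. reflexivity. }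
  replace ((lpow (q++p) k ++ (q++p)) ++ q) with ((lpow (q++p) k ++ q) ++ (p ++ q)) by (repeat rewrite <- app_assoc; reflexivity).
  rewrite IHk, <- app_assoc. reflexivity.
Qed.

Lemma rot_pow_nf {G : nat -> Grp} (p q : list (letter G)) k : nf (lpow (p ++ q) k) = [] -> nf (lpow (q ++ p) k) = [].
Proof.
  intros H. unfold nf. set (X := A (linv q) []).
  assert (HX : red X) by (apply A_red; exact I).
  rewrite <- (A_linv' q [] I) at 1. fold X. rewrite <- A_app, rot_pow, A_app.
  rewrite (A_nf (lpow (p ++ q) k) X HX), H. apply A_linv'. exact I.
Qed.

Lemma act_len_same {G : nat -> Grp} (e a : letter G) : projT1 e = projT1 a -> length (act e [a]) <= 1.
Proof.
  destruct e as [n g], a as [n' h]. simpl projT1. intros ->.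
  destruct (dec (g = gone)) as [E|E].
  { subst. rewrite (@act_one G). simpl. lia. }
  rewrite (@act_same G) by auto. destruct (dec _); simpl; lia.
Qed.

Theorem fin_rot {G : nat -> Grp} k : 0 < k -> forall N (x : list (letter G)), length (nf x) <= N ->
  nf (lpow x k) = [] -> exists p q, x = p ++ q /\ length (nf (q ++ p)) <= 1.
Proof.
  intros Hk N. induction N as [|N IH]; intros x Hl Hp.
  { exists [], x. rewrite app_nil_r. split; auto. }
  destruct (nf x) as [|y T] eqn:Ex.
  { exists [], x. rewrite app_nil_r. rewrite Ex. split; auto. }
  destruct T as [|t1 T1] eqn:ET.
  { exists [], x. rewrite app_nil_r. rewrite Ex. split; auto. }
  rewrite <- ET in *.
  assert (HT : T <> []) by (subst; discriminate).
  destruct (exists_last HT) as (T0 & z & Ez).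
  assert (Hred : red (y :: T)) by (rewrite <- Ex; apply nf_red).
  destruct (Nat.eq_dec (projT1 z) (projT1 y)) as [Ezy|Ezy].
  - destruct (suffix_split x [y] T Ex) as (p & q & Exp & Hq).
    assert (Hnp : nf p = [y]).
    { unfold nf. set (X := A (linv q) []).
      assert (HX : red X) by (apply A_red; exact I).
      rewrite <- (A_linv' q [] I) at 1. fold X. rewrite <- A_app, <- Exp.
      rewrite (A_nf x X HX), Ex, (@A_cons G), <- Hq, <- (A_nf q X HX). unfold X.
      rewrite A_linv' by exact I. apply act_cons_red. simpl in Hred |- *. tauto. }
    assert (Hnqp : nf (q ++ p) = A T [y]).
    { unfold nf. rewrite A_app. fold (nf p). rewrite Hnp, (A_nf q [y]), Hq; auto.
      simpl in Hred |- *. tauto. }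
    assert (HlT : length (nf (q ++ p)) <= length T).
    { rewrite Hnqp, Ez, A_app. pose proof (A_len T0 (act z [y])).
      pose proof (act_len_same z y Ezy). rewrite length_app. simpl. lia. }
    destruct (IH (q ++ p)) as (p' & q' & E1 & E2).
    + simpl in Hl. lia.
    + apply rot_pow_nf. rewrite <- Exp. exact Hp.
    + destruct (app_eq_app _ _ _ _ E1) as (l & [[-> ->]|[-> ->]]).
      * exists (p ++ p'), l. split; [rewrite Exp; repeat rewrite <- app_assoc; reflexivity| repeat rewrite <- app_assoc in E2; repeat rewrite <- app_assoc; exact E2].
      * exists l, (q' ++ q). split; [rewrite Exp; repeat rewrite <- app_assoc; reflexivity| repeat rewrite <- app_assoc in E2; repeat rewrite <- app_assoc; exact E2].
  - exfalso.
    assert (Hc : forall d, projT1 (last (y :: T) d) <> projT1 (hd d (y :: T))).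
    { intros d. rewrite Ez, app_comm_cons, last_last. simpl. exact Ezy. }
    assert (Hr := red_lpow (y :: T) k Hred ltac:(discriminate) Hc).
    unfold nf in Hp. rewrite (A_lpow_nf x k [] I) in Hp. fold (nf x) in Hp. rewrite Ex in Hp.
    fold (nf (lpow (y :: T) k)) in Hp. rewrite nf_of_red in Hp by exact Hr.
    apply (f_equal (@length _)) in Hp. rewrite lpow_len in Hp. simpl in Hp. lia.
Qed.

Lemma ss_app {T} (R : T -> T -> Prop) a b : StronglySorted R a -> StronglySorted R b ->
  (forall x y, In x a -> In y b -> R x y) -> StronglySorted R (a ++ b).
Proof.
  induction a as [|e a IH]; intros Ha Hb H; simpl; auto.
  apply StronglySorted_inv in Ha as [Ha1 Ha2]. constructor.
  - apply IH; auto. intros; apply H; simpl; auto.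
  - apply Forall_app. split; auto. apply Forall_forall. intros; apply H; simpl; auto.
Qed.

Lemma ss_app_inv {T} (R : T -> T -> Prop) a b x y : StronglySorted R (a ++ b) -> In x a -> In y b -> R x y.
Proof.
  induction a as [|e a IH]; intros H Hx Hy; simpl in *; [tauto|].
  apply StronglySorted_inv in H as [H1 H2]. destruct Hx as [->|Hx].
  - rewrite Forall_forall in H2. apply H2, in_or_app; auto.
  - apply IH; auto.
Qed.

Lemma ss_map {T U} (R : T -> T -> Prop) (R' : U -> U -> Prop) (f : T -> U) s :
  (forall x y, R x y -> R' (f x) (f y)) -> StronglySorted R s -> StronglySorted R' (map f s).
Proof.
  intros Hf. induction 1; simpl; constructor; auto.
  rewrite Forall_forall in *. intros z Hz. apply in_map_iff in Hz as (z' & <- & Hz'). auto.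
Qed.

Lemma ss_rev {T} (R : T -> T -> Prop) s : StronglySorted R s -> StronglySorted (fun a b => R b a) (rev s).
Proof.
  induction 1; simpl; [constructor|]. apply ss_app; auto.
  - constructor; constructor.
  - intros x y Hx [<-|[]]. rewrite Forall_forall in H0. apply H0. apply in_rev; auto.
Qed.

Lemma ss_filter {T} (R : T -> T -> Prop) (f : T -> bool) s : StronglySorted R s -> StronglySorted R (filter f s).
Proof.
  induction 1; simpl; [constructor|]. destruct (f a); auto. constructor; auto.
  rewrite Forall_forall in *. intros z Hz. apply filter_In in Hz as [Hz _]. auto.
Qed.

Lemma ss_unique {T} (R : T -> T -> Prop) : (forall x, ~ R x x) -> (forall x y z, R x y -> R y z -> R x z) ->
  forall s t, StronglySorted R s -> StronglySorted R t -> (forall x, In x s <-> In x t) -> s = t.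
Proof.
  intros Hirr Htr s. induction s as [|a s IH]; intros t Hs Ht Hst.
  - destruct t as [|b t]; auto. exfalso. apply (Hst b). simpl; auto.
  - destruct t as [|b t]. { exfalso. apply (Hst a). simpl; auto. }
    apply StronglySorted_inv in Hs as [Hs1 Hs2]. apply StronglySorted_inv in Ht as [Ht1 Ht2].
    rewrite Forall_forall in Hs2, Ht2.
    assert (a = b).
    { destruct (classic (a = b)) as [E|E]; auto. exfalso.
      assert (Ha : In a (b :: t)) by (apply Hst; simpl; auto).
      assert (Hb : In b (a :: s)) by (apply Hst; simpl; auto).
      destruct Ha as [Ha|Ha]; [congruence|]. destruct Hb as [Hb|Hb]; [congruence|].
      apply (Hirr a). eapply Htr; [apply Hs2; exact Hb| apply Ht2; exact Ha]. }
    subst. f_equal. apply IH; auto. intros x. split; intros Hx.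
    + assert (In x (b :: t)) as [->|?] by (apply Hst; simpl; auto); auto.
      exfalso. apply (Hirr x). apply Hs2; auto.
    + assert (In x (b :: s)) as [->|?] by (apply Hst; simpl; auto); auto.
      exfalso. apply (Hirr x). apply Ht2; auto.
Qed.

Lemma insert_exists {T} (R : T -> T -> Prop) : (forall x y z, R x y -> R y z -> R x z) ->
  (forall x y, x = y \/ R x y \/ R y x) ->
  forall s, StronglySorted R s -> forall a, exists s', StronglySorted R s' /\ (forall x, In x s' <-> x = a \/ In x s).
Proof.
  intros Htr Htot s Hs a. induction Hs as [|b s Hs IH Hb].
  - exists [a]. split; [constructor; constructor|]. simpl; intros x; split; intros; intuition congruence.
  - destruct (Htot a b) as [<-|[Hab|Hba]].
    + exists (a :: s). split; [constructor; auto|]. simpl; intros x; split; intros; intuition congruence.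
    + exists (a :: b :: s). split.
      * constructor; [constructor; auto|]. constructor; auto.
        rewrite Forall_forall in *. intros; eauto.
      * simpl; intros x; split; intros; intuition congruence.
    + destruct IH as (s' & Hs' & Hm). exists (b :: s'). split.
      * constructor; auto. rewrite Forall_forall in *. intros x Hx. apply Hm in Hx as [->|Hx]; auto.
      * intros x. simpl. rewrite Hm. split; intros; intuition congruence.
Qed.

Lemma sort_exists {T} (R : T -> T -> Prop) : (forall x y z, R x y -> R y z -> R x z) ->
  (forall x y, x = y \/ R x y \/ R y x) ->
  forall l, exists s, StronglySorted R s /\ (forall x, In x s <-> In x l).
Proof.
  intros Htr Htot l. induction l as [|a l IH].
  - exists []. split; [constructor|]. simpl; tauto.
  - destruct IH as (s & Hs & Hm). destruct (insert_exists R Htr Htot s Hs a) as (s' & Hs' & Hm').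
    exists s'. split; auto. intros x. rewrite Hm', Hm. simpl. split; intros; intuition congruence.
Qed.

Definition goodo {G : nat -> Grp} (W : raw_word G) :=
  (forall x, ~ plt W x x) /\ (forall x y z, plt W x y -> plt W y z -> plt W x z).

Definition LL {G : nat -> Grp} (W : raw_word G) m (l : list (letter G)) :=
  exists s, restr W m s /\ map (plet W) s = l.

Lemma restr_unique {G : nat -> Grp} (W : raw_word G) m s t : goodo W -> restr W m s -> restr W m t -> s = t.
Proof.
  intros [H1 H2] [Hs1 Hs2] [Ht1 Ht2]. apply (ss_unique (plt W) H1 H2); auto.
  intros x. rewrite Hs2, Ht2. tauto.
Qed.

Lemma LL_unique {G : nat -> Grp} (W : raw_word G) m l s : goodo W -> LL W m l -> restr W m s -> map (plet W) s = l.
Proof. intros Hg (s' & Hs' & <-) Hs. rewrite (restr_unique W m s s'); auto. Qed.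

Lemma LL_ok {G : nat -> Grp} (W : raw_word G) m l : LL W m l -> ok m l.
Proof.
  intros (s & [_ Hs] & <-). unfold ok. rewrite Forall_forall. intros e He.
  apply in_map_iff in He as (x & <- & Hx). apply Hs; auto.
Qed.

Lemma goodo_concat {G : nat -> Grp} (W1 W2 : raw_word G) : goodo W1 -> goodo W2 -> goodo (wconcat W1 W2).
Proof.
  intros [a1 a2] [b1 b2]. split.
  - intros [x|x]; simpl; auto.
  - intros [x|x] [y|y] [z|z]; simpl; eauto; tauto.
Qed.

Lemma goodo_inv {G : nat -> Grp} (W : raw_word G) : goodo W -> goodo (winv W).
Proof. intros [a1 a2]. split; simpl; eauto. Qed.

Lemma goodo_empty {G : nat -> Grp} : goodo (@wempty G).
Proof. split; simpl; tauto. Qed.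

Lemma goodo_single {G : nat -> Grp} i (a : G i) : goodo (wsingle i a).
Proof. split; simpl; tauto. Qed.

Lemma goodo_pow {G : nat -> Grp} (W : raw_word G) k : goodo W -> goodo (wpow W k).
Proof. intros H; induction k; simpl. apply goodo_empty. apply goodo_concat; auto. Qed.

Lemma LL_concat {G : nat -> Grp} (W1 W2 : raw_word G) m l1 l2 : LL W1 m l1 -> LL W2 m l2 -> LL (wconcat W1 W2) m (l1 ++ l2).
Proof.
  intros (s1 & [Hs1 Hm1] & <-) (s2 & [Hs2 Hm2] & <-).
  exists (map inl s1 ++ map inr s2). split; [split|].
  - apply ss_app.
    + apply (ss_map (plt W1)); auto.
    + apply (ss_map (plt W2)); auto.
    + intros x y Hx Hy. apply in_map_iff in Hx as (? & <- & _). apply in_map_iff in Hy as (? & <- & _). exact I.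
  - intros [x|x]; simpl; rewrite in_app_iff, !in_map_iff.
    + rewrite <- Hm1. split.
      * intros [(y & E & Hy)|(y & E & Hy)]; [injection E as ->; auto|discriminate].
      * intros H. left. eauto.
    + rewrite <- Hm2. split.
      * intros [(y & E & Hy)|(y & E & Hy)]; [discriminate|injection E as ->; auto].
      * intros H. right. eauto.
  - rewrite map_app, !map_map. reflexivity.
Qed.

Lemma LL_inv {G : nat -> Grp} (W : raw_word G) m l : LL W m l -> LL (winv W) m (linv l).
Proof.
  intros (s & [Hs Hm] & <-). exists (rev s). split; [split|].
  - apply (ss_rev (plt W)); auto.
  - intros x. rewrite <- in_rev. apply Hm.
  - unfold linv. rewrite map_rev, map_map. reflexivity.
Qed.

Lemma LL_empty {G : nat -> Grp} m : LL (@wempty G) m [].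
Proof. exists []. split; [split|]; auto. constructor. intros []. Qed.

Lemma LL_single {G : nat -> Grp} i (a : G i) m : LL (wsingle i a) m (if i <=? m then [LT G i a] else []).
Proof.
  destruct (Nat.leb_spec i m) as [H|H].
  - exists [tt]. split; [split|]; auto.
    + constructor; constructor.
    + intros []. simpl. tauto.
  - exists []. split; [split|]; auto.
    + constructor.
    + intros []. simpl. lia.
Qed.

Lemma LL_pow {G : nat -> Grp} (W : raw_word G) m l k : LL W m l -> LL (wpow W k) m (lpow l k).
Proof. intros H. induction k; simpl. apply LL_empty. apply LL_concat; auto. Qed.

Lemma is_word_goodo {G : nat -> Grp} (W : raw_word G) : is_word W -> goodo W.
Proof. intros (H1 & H2 & _). split; auto. Qed.

Lemma restr_exists {G : nat -> Grp} (W : raw_word G) m : is_word W -> exists s, restr W m s.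
Proof.
  intros (H1 & H2 & H3 & H4 & H5 & H6).
  assert (Hc : exists c, forall x, projT1 (plet W x) <= m -> In x c).
  { induction m as [|m IH].
    - destruct (H6 0) as (c & Hc). exists c. intros x Hx. apply Hc. lia.
    - destruct IH as (c & Hc). destruct (H6 (S m)) as (c' & Hc'). exists (c ++ c').
      intros x Hx. apply in_or_app. destruct (Nat.eq_dec (projT1 (plet W x)) (S m)); [right; auto|left; apply Hc; lia]. }
  destruct Hc as (c & Hc).
  destruct (sort_exists (plt W) H2 H3 (filter (fun x => projT1 (plet W x) <=? m) c)) as (s & Hs & Hm).
  exists s. split; auto. intros x. rewrite Hm, filter_In, Nat.leb_le. split; [tauto|]. intros; split; auto.
Qed.

Definition filtL {G : nat -> Grp} m (l : list (letter G)) := filter (fun e : letter G => projT1 e <=? m) l.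

Lemma fpe_filt {G : nat -> Grp} M m (x y : list (letter G)) : fp_equiv G M x y -> fp_equiv G m (filtL m x) (filtL m y).
Proof.
  induction 1.
  - destruct H; unfold filtL; rewrite !filter_app; simpl.
    + destruct (Nat.leb_spec n m).
      * apply rst_step. apply fp_merge; auto.
      * apply rst_refl.
    + destruct (Nat.leb_spec n m).
      * apply rst_step. apply fp_drop; auto.
      * apply rst_refl.
  - apply rst_refl.
  - apply rst_sym; auto.
  - eapply rst_trans; eauto.
Qed.

Lemma nf_len {G : nat -> Grp} (x : list (letter G)) : length (nf x) <= length x.
Proof. pose proof (A_len x []) as H. unfold nf. simpl in H. lia. Qed.

Lemma nf_filt {G : nat -> Grp} M m (x : list (letter G)) : ok M x -> nf (filtL m x) = nf (filtL m (nf x)).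
Proof. intros H. apply (nf_of_fpe m). apply (fpe_filt M). apply nf_fpe; auto. Qed.

Lemma filt_len {G : nat -> Grp} m (x : list (letter G)) : length (filtL m x) <= length x.
Proof. unfold filtL. induction x; simpl; auto. destruct (_ <=? _); simpl; lia. Qed.

Lemma red_short {G : nat -> Grp} (x : list (letter G)) : red x -> length x <= 1 -> forall m, red (filtL m x).
Proof.
  intros H Hl m. destruct x as [|e [|e' x]]; simpl in *; auto; [|lia].
  unfold filtL; simpl. destruct (_ <=? _); simpl; auto.
Qed.

Lemma firstn_len_app {T} (a b : list T) : firstn (length a) (a ++ b) = a.
Proof. rewrite firstn_app, firstn_all, Nat.sub_diag. simpl. apply app_nil_r. Qed.

Lemma skipn_len_app {T} (a b : list T) : skipn (length a) (a ++ b) = b.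
Proof. rewrite skipn_app, skipn_all, Nat.sub_diag. reflexivity. Qed.

Lemma in_firstn {T} n (l : list T) x : In x (firstn n l) -> In x l.
Proof. intros H. rewrite <- (firstn_skipn n l). apply in_or_app; auto. Qed.

Lemma firstn_le_in {T} i j (l : list T) x : i <= j -> In x (firstn i l) -> In x (firstn j l).
Proof.
  intros Hij H. assert (E : firstn i l = firstn i (firstn j l)).
  { rewrite firstn_firstn. f_equal. lia. }
  rewrite E in H. eapply in_firstn; eauto.
Qed.

Lemma filter_comm {T} (f g : T -> bool) l : filter f (filter g l) = filter g (filter f l).
Proof.
  induction l as [|a l IH]; simpl; auto.
  destruct (g a) eqn:Eg, (f a) eqn:Ef; simpl; rewrite ?Eg, ?Ef, IH; auto.
Qed.

Lemma filter_true {T} (f : T -> bool) l : (forall x, In x l -> f x = true) -> filter f l = l.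
Proof. induction l; simpl; intros H; auto. rewrite H by auto. f_equal. auto. Qed.

Lemma filter_false {T} (f : T -> bool) l : (forall x, In x l -> f x = false) -> filter f l = [].
Proof. induction l; simpl; intros H; auto. rewrite H by auto. auto. Qed.

Lemma lnp (P : nat -> Prop) : (exists n, P n) -> exists n, P n /\ forall k, P k -> n <= k.
Proof.
  intros [n Hn]. apply NNPP. intros Hno.
  assert (forall n, forall k, k <= n -> ~ P k).
  { induction n0; intros k Hk Pk.
    - apply Hno. exists k. split; auto. intros. lia.
    - apply Hno. exists k. split; auto. intros k' Pk'.
      destruct (Nat.le_gt_cases k k'); auto. exfalso. apply (IHn0 k'); auto. lia. }
  apply (H n n); auto.
Qed.

Lemma is_word_inv {G : nat -> Grp} (W : raw_word G) : is_word W -> is_word (winv W).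
Proof.
  intros (H1 & H2 & H3 & H4 & H5 & H6). repeat split; simpl; auto.
  - intros x y z Hxy Hyz. eauto.
  - intros x y. destruct (H3 x y) as [?|[?|?]]; auto.
  - intros x Hx. apply (H5 x). apply g_inv1. exact Hx.
Qed.

Section Main.
Variable G : nat -> Grp.
Variable w : raw_word G.
Hypothesis Hw : is_word w.
Variable k : nat.
Hypothesis Hk : 0 < k.
Hypothesis Hpow : word_equiv (wpow w k) wempty.

Definition idx (x : pos w) := projT1 (plet w x).
Definition fm m := fun x => idx x <=? m.

Definition sl m : list (pos w) :=
  proj1_sig (constructive_indefinite_description _ (restr_exists w m Hw)).

Lemma sl_restr m : restr w m (sl m).
Proof. unfold sl. destruct (constructive_indefinite_description _ _). simpl. auto. Qed.

Lemma goodo_w : goodo w.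
Proof. apply is_word_goodo; auto. Qed.

Lemma sl_filter m M : m <= M -> sl m = filter (fm m) (sl M).
Proof.
  intros HmM. apply (restr_unique w m); [apply goodo_w|apply sl_restr|].
  destruct (sl_restr M) as [H1 H2]. split.
  - apply ss_filter; auto.
  - intros x. rewrite filter_In, H2. unfold fm, idx. rewrite Nat.leb_le. split; [tauto|intros; split; auto; lia].
Qed.

Lemma sl_ok m : ok m (map (plet w) (sl m)).
Proof. apply (LL_ok w). exists (sl m). split; auto. apply sl_restr. Qed.

Lemma sl_in m x : In x (sl m) <-> idx x <= m.
Proof. destruct (sl_restr m) as [_ H]. apply H. Qed.

Definition rot {T} (l : list T) i := skipn i l ++ firstn i l.
Definition goodcut m i := length (nf (map (plet w) (rot (sl m) i))) <= 1.

Lemma Hpow' m : nf (lpow (map (plet w) (sl m)) k) = [].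
Proof.
  assert (HL : LL (wpow w k) m (lpow (map (plet w) (sl m)) k)).
  { apply LL_pow. exists (sl m). split; auto. apply sl_restr. }
  destruct HL as (s & Hs & Es).
  specialize (Hpow m s [] Hs). rewrite Es in Hpow.
  apply nf_of_fpe in Hpow. apply Hpow. split; [constructor|]. intros [].
Qed.

Lemma Hex m : exists i, goodcut m i.
Proof.
  destruct (fin_rot k Hk _ (map (plet w) (sl m)) (le_n _) (Hpow' m)) as (p & q & E & Hl).
  exists (length p). unfold goodcut, rot. rewrite map_app, <- firstn_map, <- skipn_map, E.
  rewrite firstn_len_app, skipn_len_app. exact Hl.
Qed.

Definition im m := proj1_sig (constructive_indefinite_description _ (lnp _ (Hex m))).

Lemma im_spec m : goodcut m (im m) /\ forall j, goodcut m j -> im m <= j.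
Proof. unfold im. destruct (constructive_indefinite_description _ _). simpl. auto. Qed.

Definition Lset m := firstn (im m) (sl m).

Lemma rot_filter m M i : m <= M ->
  filter (fm m) (rot (sl M) i) = rot (sl m) (length (filter (fm m) (firstn i (sl M)))).
Proof.
  intros H. rewrite (sl_filter m M H). rewrite <- (firstn_skipn i (sl M)) at 2.
  unfold rot. rewrite !filter_app, firstn_len_app, skipn_len_app. reflexivity.
Qed.

Lemma proj_short m M i : m <= M -> goodcut M i ->
  length (nf (map (plet w) (filter (fm m) (rot (sl M) i)))) <= 1.
Proof.
  intros H Hg. unfold goodcut in Hg.
  assert (E : map (plet w) (filter (fm m) (rot (sl M) i)) = filtL m (map (plet w) (rot (sl M) i))).
  { unfold filtL. rewrite filter_map_swap. reflexivity. }
  rewrite E. rewrite (nf_filt M).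
  - pose proof (nf_len (filtL m (nf (map (plet w) (rot (sl M) i))))).
    pose proof (filt_len m (nf (map (plet w) (rot (sl M) i)))). lia.
  - pose proof (sl_ok M) as HO. unfold ok in *. rewrite Forall_forall in *.
    intros e He. apply HO. unfold rot in He. rewrite map_app, in_app_iff in He.
    rewrite <- (firstn_skipn i (sl M)), map_app, in_app_iff. tauto.
Qed.

Lemma Lmono m M x : m <= M -> In x (Lset m) -> In x (Lset M).
Proof.
  intros H Hx. destruct (im_spec M) as [HgM _].
  pose (j := length (filter (fm m) (firstn (im M) (sl M)))).
  assert (Hgj : goodcut m j).
  { unfold goodcut, j. rewrite <- rot_filter by auto. apply proj_short; auto. }
  destruct (im_spec m) as [_ Hmin]. specialize (Hmin j Hgj).
  unfold Lset in *. apply (firstn_le_in _ j) in Hx; auto.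
  rewrite (sl_filter m M H) in Hx. rewrite <- (firstn_skipn (im M) (sl M)) in Hx.
  rewrite filter_app in Hx. unfold j in Hx. rewrite firstn_len_app in Hx.
  apply filter_In in Hx. tauto.
Qed.

Definition D x := exists m', idx x <= m' /\ In x (Lset m').
Definition Db x := if dec (D x) then true else false.

Lemma Db_true x : Db x = true <-> D x.
Proof. unfold Db. destruct (dec (D x)); split; auto; discriminate. Qed.

Lemma stab_list m l : (forall x, In x l -> idx x <= m) ->
  exists M, m <= M /\ forall x, In x l -> (D x <-> In x (Lset M)).
Proof.
  induction l as [|x l IH]; intros Hl.
  { exists m. split; auto. intros _ []. }
  destruct IH as (M0 & HM0 & HI). { intros; apply Hl; simpl; auto. }
  destruct (classic (D x)) as [Dx|nDx].
  - destruct Dx as (m1 & Hm1 & Hin). exists (Nat.max M0 m1). split; [lia|].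
    intros y Hy. split.
    + intros Dy. destruct Hy as [<-|Hy].
      * apply (Lmono m1); auto; lia.
      * apply (Lmono M0); [lia|]. apply HI; auto.
    + intros Hy'. exists (Nat.max M0 m1). split; auto. specialize (Hl y Hy). lia.
  - exists M0. split; auto. intros y Hy. split.
    + intros Dy. destruct Hy as [<-|Hy]; [contradiction|]. apply HI; auto.
    + intros Hy'. exists M0. split; auto. specialize (Hl y Hy). lia.
Qed.

Lemma stab m : exists M, m <= M /\ forall x, idx x <= m -> (D x <-> In x (Lset M)).
Proof.
  destruct (stab_list m (sl m)) as (M & HM & H).
  { intros x. apply sl_in. }
  exists M. split; auto. intros x Hx. apply H. apply sl_in; auto.
Qed.

Definition nDb x := negb (Db x).
Definition pl m := map (plet w) (filter Db (sl m)).
Definition ql m := map (plet w) (filter nDb (sl m)).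

Lemma key m : map (plet w) (sl m) = pl m ++ ql m /\ length (nf (ql m ++ pl m)) <= 1.
Proof.
  destruct (stab m) as (M & HM & HD).
  set (F := firstn (im M) (sl M)). set (S := skipn (im M) (sl M)).
  assert (Esl : sl m = filter (fm m) F ++ filter (fm m) S).
  { rewrite (sl_filter m M HM). unfold F, S. rewrite <- filter_app, firstn_skipn. reflexivity. }
  assert (HF : forall x, In x (filter (fm m) F) -> Db x = true).
  { intros x Hx. apply Db_true. apply filter_In in Hx as [Hx1 Hx2]. exists M. split; auto.
    unfold fm in Hx2. apply Nat.leb_le in Hx2. lia. }
  assert (HS : forall x, In x (filter (fm m) S) -> Db x = false).
  { intros x Hx. apply filter_In in Hx as [Hx1 Hx2]. unfold fm in Hx2. apply Nat.leb_le in Hx2.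
    destruct (Db x) eqn:E; auto. exfalso. apply Db_true in E. apply HD in E; auto.
    destruct (sl_restr M) as [Hss _]. rewrite <- (firstn_skipn (im M) (sl M)) in Hss.
    apply (goodo_w) with x. eapply ss_app_inv; eauto. }
  assert (Ep : filter Db (sl m) = filter (fm m) F).
  { rewrite Esl, filter_app. rewrite (filter_true Db (filter (fm m) F)) by auto.
    rewrite (filter_false Db (filter (fm m) S)) by auto. apply app_nil_r. }
  assert (Eq : filter nDb (sl m) = filter (fm m) S).
  { rewrite Esl, filter_app. rewrite (filter_false nDb (filter (fm m) F)).
    - rewrite (filter_true nDb (filter (fm m) S)); auto.
      intros x Hx. unfold nDb. rewrite HS; auto.
    - intros x Hx. unfold nDb. rewrite HF; auto. }
  unfold pl, ql. rewrite Ep, Eq. split.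
  - rewrite Esl, map_app. reflexivity.
  - rewrite <- map_app. replace (filter (fm m) S ++ filter (fm m) F) with (filter (fm m) (rot (sl M) (im M))).
    + apply proj_short; auto. apply im_spec.
    + unfold rot. rewrite filter_app. reflexivity.
Qed.

Definition t m := nf (ql m ++ pl m).

Lemma t_consist m M : m <= M -> t m = filtL m (t M).
Proof.
  intros H. unfold t.
  assert (E : ql m ++ pl m = filtL m (ql M ++ pl M)).
  { unfold ql, pl, filtL. rewrite filter_app, !filter_map_swap. rewrite (sl_filter m M H).
    fold (fm m). rewrite !(filter_comm (fm m)). reflexivity. }
  rewrite E, (nf_filt M).
  - apply nf_of_red. apply red_short. apply nf_red. apply (key M).
  - pose proof (sl_ok M) as HO. destruct (key M) as [E1 _]. rewrite E1 in HO.
    unfold ok in *. rewrite Forall_forall in *. intros e He. apply HO. rewrite in_app_iff in *. tauto.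
Qed.

Definition Pt := {x : pos w | Db x = true}.
Definition P : raw_word G := RW Pt (fun a b => plt w (proj1_sig a) (proj1_sig b)) (fun a => plet w (proj1_sig a)).

Lemma sig_inj (a b : Pt) : proj1_sig a = proj1_sig b -> a = b.
Proof.
  destruct a as [a Ha], b as [b Hb]. simpl. intros ->. f_equal. apply UIP_dec. apply bool_dec.
Qed.

Definition tosig (y : pos w) : option Pt :=
  match bool_dec (Db y) true with left H => Some (exist _ y H) | right _ => None end.

Fixpoint sfilter (l : list (pos w)) : list Pt :=
  match l with
  | [] => []
  | y :: l' => match tosig y with Some a => a :: sfilter l' | None => sfilter l' end
  end.

Lemma sfilter_map l : map (@proj1_sig _ _) (sfilter l) = filter Db l.
Proof.
  induction l as [|y l IH]; simpl; auto. unfold tosig.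
  destruct (bool_dec (Db y) true) as [E|E].
  - simpl. rewrite E. f_equal; auto.
  - apply not_true_is_false in E. rewrite E. auto.
Qed.

Lemma sfilter_in l (a : Pt) : In a (sfilter l) <-> In (proj1_sig a) l.
Proof.
  split.
  - intros H. apply (in_map (@proj1_sig _ _)) in H. rewrite sfilter_map in H. apply filter_In in H. tauto.
  - intros H. assert (H' : In (proj1_sig a) (filter Db l)).
    { apply filter_In. split; auto. apply (proj2_sig a). }
    rewrite <- sfilter_map in H'. apply in_map_iff in H' as (b & Eb & Hb).
    rewrite (sig_inj a b); auto.
Qed.

Lemma sfilter_ss l : StronglySorted (plt w) l -> StronglySorted (plt P) (sfilter l).
Proof.
  induction 1 as [|y l Hl IH Hy]; simpl; [constructor|]. unfold tosig.
  destruct (bool_dec (Db y) true) as [E|E]; auto. constructor; auto.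
  rewrite Forall_forall in *. intros a Ha. simpl. apply Hy. apply sfilter_in. auto.
Qed.

Lemma LL_P m : LL P m (pl m).
Proof.
  exists (sfilter (sl m)). destruct (sl_restr m) as [H1 H2]. split; [split|].
  - apply sfilter_ss; auto.
  - intros a. rewrite sfilter_in. apply H2.
  - unfold pl. rewrite <- sfilter_map, map_map. reflexivity.
Qed.

Lemma is_word_P : is_word P.
Proof.
  destruct Hw as (H1 & H2 & H3 & (f & Hf) & H5 & H6). repeat split.
  - intros x. simpl. apply H1.
  - intros x y z. simpl. apply H2.
  - intros x y. simpl. destruct (H3 (proj1_sig x) (proj1_sig y)) as [E|[E|E]]; auto.
    left. apply sig_inj; auto.
  - exists (fun a => f (proj1_sig a)). intros x y E. apply sig_inj. auto.
  - intros x. simpl. apply H5.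
  - intros n. destruct (H6 n) as (c & Hc). exists (sfilter c). intros x Hx.
    apply sfilter_in. apply Hc. exact Hx.
Qed.

Definition u := winv P.

Lemma conj_nf m l : LL (wconcat (wconcat u w) (winv u)) m l -> nf l = t m.
Proof.
  intros HL.
  assert (HL2 : LL (wconcat (wconcat u w) (winv u)) m (linv (pl m) ++ map (plet w) (sl m) ++ linv (linv (pl m)))).
  { rewrite app_assoc. apply LL_concat; [apply LL_concat|].
    - apply LL_inv, LL_P.
    - exists (sl m). split; auto. apply sl_restr.
    - apply LL_inv, LL_inv, LL_P. }
  destruct HL as (s & Hs & <-).
  assert (Gu : goodo u) by (apply goodo_inv, is_word_goodo, is_word_P).
  rewrite (LL_unique _ m _ s (goodo_concat _ _ (goodo_concat _ _ Gu goodo_w) (goodo_inv _ Gu)) HL2 Hs).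
  rewrite linvK. destruct (key m) as [E _]. rewrite E.
  unfold t, nf. rewrite !A_app. rewrite A_linv; [reflexivity|]. apply A_red, A_red. exact I.

Qed.

Lemma final : exists u0 : raw_word G, is_word u0 /\
    (word_equiv (wconcat (wconcat u0 w) (winv u0)) wempty \/
     exists (i : nat) (a : G i), a <> gone /\
       word_equiv (wconcat (wconcat u0 w) (winv u0)) (wsingle i a)).
Proof.
  exists u. split. { apply is_word_inv, is_word_P. }
  destruct (classic (forall m, t m = [])) as [Hall|Hn].
  - left. intros m s1 s2 H1 H2.
    assert (Hs2 : s2 = []) by (destruct s2 as [|[] ?]; reflexivity). subst s2. change (map (plet (@wempty G)) []) with (@nil (letter G)).
    assert (HL : LL (wconcat (wconcat u w) (winv u)) m (map (plet _) s1)) by (exists s1; auto).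
    apply fpe_of_nf.
    + eapply LL_ok; eauto.
    + constructor.
    + rewrite (conj_nf m _ HL). apply Hall.
  - apply not_all_ex_not in Hn as [m0 Hm0].
    destruct (key m0) as [_ Hlen]. fold (t m0) in Hlen.
    assert (Hred0 : red (t m0)) by apply nf_red.
    assert (Hok0 : ok m0 (t m0)).
    { apply nf_ok. pose proof (sl_ok m0) as HO. destruct (key m0) as [E1 _]. rewrite E1 in HO.
      unfold ok in *. rewrite Forall_forall in *. intros e He. apply HO. rewrite in_app_iff in *. tauto. }
    destruct (t m0) as [|[i a] [|e2 r2]] eqn:Et; [congruence| |simpl in Hlen; lia].
    assert (Ha : a <> gone) by (simpl in Hred0; tauto).
    assert (Hi : i <= m0) by (inversion Hok0; auto).
    assert (Ht : forall m, t m = if i <=? m then [LT G i a] else []).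
    { intros m. destruct (Nat.le_ge_cases m m0) as [Hle|Hge].
      - rewrite (t_consist m m0 Hle), Et. reflexivity.
      - pose proof (t_consist m0 m Hge) as Hc. rewrite Et in Hc.
        destruct (key m) as [_ Hlm]. fold (t m) in Hlm.
        destruct (t m) as [|e' [|e3 r3]]; [discriminate| |simpl in Hlm; lia].
        unfold filtL in Hc. simpl in Hc. destruct (projT1 e' <=? m0) eqn:Ee; [|discriminate].
        injection Hc as <-. destruct (Nat.leb_spec i m); [reflexivity|lia]. }
    right. exists i, a. split; auto. intros m s1 s2 H1 H2.
    assert (HL : LL (wconcat (wconcat u w) (winv u)) m (map (plet _) s1)) by (exists s1; auto).
    rewrite (LL_unique _ m _ s2 (goodo_single i a) (LL_single i a m) H2).
    apply fpe_of_nf.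
    + eapply LL_ok; eauto.
    + eapply LL_ok. apply LL_single.
    + rewrite (conj_nf m _ HL), Ht. destruct (i <=? m); [|reflexivity].
      symmetry. apply nf_of_red. simpl. repeat split; auto.
Qed.

End Main.

Theorem lemma22 (G : nat -> Grp) (w : raw_word G) :
  is_word w ->
  (exists k : nat, 0 < k /\ word_equiv (wpow w k) wempty) ->
  exists u : raw_word G, is_word u /\
    (word_equiv (wconcat (wconcat u w) (winv u)) wempty \/
     exists (i : nat) (a : G i), a <> gone /\
       word_equiv (wconcat (wconcat u w) (winv u)) (wsingle i a)).
Proof.
  intros Hw [k [Hk Hp]]. exact (final G w Hw k Hk Hp).
Qed.
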